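(* Let $\omega>0$ and consider two qubits with $H_{\rm Ant}=\omega\sum_{j=1}^3\sigma^j\otimes\sigma^j$. Let $W_p=(1-p)\frac{\mathbb 1}{4}+p\ket{\psi}\bra{\psi}$ with $p\in[0,1]$ and $\ket\psi$ any of the four Bell states $\frac{1}{\sqrt2}(\ket{00}\pm\ket{11})$, $\frac{1}{\sqrt2}(\ket{01}\pm\ket{10})$. Then $\mathcal C_{\rm P}^1(H_{\rm Ant})=2\omega$, $\max_\rho\mathcal C_{\rm P}(\rho,H_{\rm Ant})=\|H_{\rm Ant}\|_\infty=4\omega$, and $\mathcal C_{\rm P}(W_p,H_{\rm Ant})=4p\omega$. Consequently $\mathcal C_{\rm P}(W_p,H_{\rm Ant})>\mathcal C_{\rm P}^1(H_{\rm Ant})$ if and only if $p>1/2$.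
   Context: $\sigma^1,\sigma^2,\sigma^3$ are the Pauli matrices. For a two-qubit density operator $\rho$, the parallel capacity is $\mathcal C_{\rm P}(\rho,H):=\max_{U_a,U_b}\mathrm{tr}[(U_a\otimes U_b)\rho(U_a\otimes U_b)^\dagger H]-\min_{U_a,U_b}\mathrm{tr}[(U_a\otimes U_b)\rho(U_a\otimes U_b)^\dagger H]$ over single-qubit unitaries $U_a,U_b$; $\mathcal C_{\rm P}^1(H):=\max_{\rho\text{ separable}}\mathcal C_{\rm P}(\rho,H)$; $\|H\|_\infty$ is the difference between largest and smallest eigenvalues of $H$. *)

(* Defs.v *)
From HB Require Import structures.
From mathcomp Require Import all_boot all_order all_algebra.
From mathcomp Require Import classical_sets reals.
From mathcomp Require Export complex mxtens.
Set Implicit Arguments. Unset Strict Implicit. Unset Printing Implicit Defensive.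
Import Order.TTheory GRing.Theory Num.Theory.
Local Open Scope ring_scope.
Local Open Scope classical_set_scope.
Local Open Scope complex_scope.

Section QDefs.
Variable R : realType.
Local Notation C := R[i].

Definition dagger {m n} (A : 'M[C]_(m, n)) : 'M[C]_(n, m) := (map_mx conjc A)^T.

Definition hermitian {n} (A : 'M[C]_n) : Prop := dagger A = A.

(* positive semidefinite: <v|A|v> is a nonnegative (hence real) complex number *)
Definition psd {n} (A : 'M[C]_n) : Prop :=
  forall v : 'cV[C]_n, 0 <= (dagger v *m A *m v) 0 0.

Definition density {n} (rho : 'M[C]_n) : Prop :=
  [/\ hermitian rho, psd rho & \tr rho = 1].

Definition unitary {n} (U : 'M[C]_n) : Prop := U *m dagger U = 1%:M.

Definition sigma1 : 'M[C]_2 :=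
  \matrix_(i < 2, j < 2) (if (i == 0 :> nat) && (j == 1 :> nat) then 1
                          else if (i == 1 :> nat) && (j == 0 :> nat) then 1 else 0).
Definition sigma2 : 'M[C]_2 :=
  \matrix_(i < 2, j < 2) (if (i == 0 :> nat) && (j == 1 :> nat) then - 'i
                          else if (i == 1 :> nat) && (j == 0 :> nat) then 'i else 0).
Definition sigma3 : 'M[C]_2 :=
  \matrix_(i < 2, j < 2) (if (i == 0 :> nat) && (j == 0 :> nat) then 1
                          else if (i == 1 :> nat) && (j == 1 :> nat) then -1 else 0).

Definition HAnt (omega : R) : 'M[C]_(2 * 2) :=
  omega%:C *: (sigma1 *t sigma1 + sigma2 *t sigma2 + sigma3 *t sigma3).

(* computational basis |ab> of two qubits, index a*2+b as in the Kronecker product *)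
Definition ket2 (a b : 'I_2) : 'cV[C]_(2 * 2) :=
  delta_mx (mxtens_index (a, b)) 0.

Definition q0 : 'I_2 := @Ordinal 2 0 isT.
Definition q1 : 'I_2 := @Ordinal 2 1 isT.

Definition invsqrt2 : C := ((Num.sqrt (2 : R))^-1)%:C.

Definition phi_plus  := invsqrt2 *: (ket2 q0 q0 + ket2 q1 q1).
Definition phi_minus := invsqrt2 *: (ket2 q0 q0 - ket2 q1 q1).
Definition psi_plus  := invsqrt2 *: (ket2 q0 q1 + ket2 q1 q0).
Definition psi_minus := invsqrt2 *: (ket2 q0 q1 - ket2 q1 q0).

Definition bell_state (psi : 'cV[C]_(2 * 2)) : Prop :=
  psi = phi_plus \/ psi = phi_minus \/ psi = psi_plus \/ psi = psi_minus.

Definition Wp (p : R) (psi : 'cV[C]_(2 * 2)) : 'M[C]_(2 * 2) :=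
  ((1 - p) / 4)%:C *: 1%:M + p%:C *: (psi *m dagger psi).

(* energy tr[(Ua (x) Ub) rho (Ua (x) Ub)^dagger H] (real part; it is real) *)
Definition energy (rho H : 'M[C]_(2 * 2)) (Ua Ub : 'M[C]_2) : R :=
  complex.Re (\tr ((Ua *t Ub) *m rho *m dagger (Ua *t Ub) *m H)).

Definition energies (rho H : 'M[C]_(2 * 2)) : set R :=
  [set x | exists Ua Ub : 'M[C]_2, [/\ unitary Ua, unitary Ub & x = energy rho H Ua Ub]].

Definition CP (rho H : 'M[C]_(2 * 2)) : R :=
  sup (energies rho H) - inf (energies rho H).

Definition separable (rho : 'M[C]_(2 * 2)) : Prop :=
  exists k (w : 'I_k -> R) (A B : 'I_k -> 'M[C]_2),
    [/\ forall i, 0 <= w i, \sum_(i < k) w i = 1,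
        forall i, density (A i), forall i, density (B i) &
        rho = \sum_(i < k) (w i)%:C *: (A i *t B i)].

Definition CP1 (H : 'M[C]_(2 * 2)) : R :=
  sup [set x | exists rho, separable rho /\ x = CP rho H].

Definition CPmax (H : 'M[C]_(2 * 2)) : R :=
  sup [set x | exists rho, density rho /\ x = CP rho H].

(* ||H||_infty := largest eigenvalue minus smallest eigenvalue *)
Definition real_spectrum {n} (H : 'M[C]_n) : set R :=
  [set x | eigenvalue H x%:C].
Definition spec_spread {n} (H : 'M[C]_n) : R :=
  sup (real_spectrum H) - inf (real_spectrum H).

End QDefs.

(* Main.v *)
Require Import Defs.
From mathcomp Require Import all_boot all_order all_algebra.
From mathcomp Require Import classical_sets reals.
From mathcomp Require Import complex mxtens.
From mathcomp Require Import ring lra.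
Import Order.TTheory GRing.Theory Num.Theory.
Local Open Scope ring_scope.
Set Implicit Arguments. Unset Strict Implicit. Unset Printing Implicit Defensive.

Section S.
Local Open Scope complex_scope.
Local Open Scope classical_set_scope.
Variable R : realType.
Local Notation C := R[i].

Lemma daggerK m n (A : 'M[C]_(m, n)) : dagger (dagger A) = A.
Proof. by apply/matrixP => i j; rewrite !mxE conjcK. Qed.

Lemma dagger_mul m n p (A : 'M[C]_(m, n)) (B : 'M[C]_(n, p)) :
  dagger (A *m B) = dagger B *m dagger A.
Proof. by rewrite /dagger map_mxM trmx_mul. Qed.

Lemma dagger1 n : dagger (1%:M : 'M[C]_n) = 1%:M.
Proof. by rewrite /dagger map_mx1 trmx1. Qed.

Lemma dagger_tens m n p q (A : 'M[C]_(m, n)) (B : 'M[C]_(p, q)) :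
  dagger (A *t B) = dagger A *t dagger B.
Proof. by rewrite /dagger map_mxT trmx_tens. Qed.

Lemma tens11 m n : (1%:M : 'M[C]_m) *t (1%:M : 'M[C]_n) = 1%:M.
Proof.
apply/matrixP => i j.
case: (mxtens_indexP i) => i0 i1; case: (mxtens_indexP j) => j0 j1.
rewrite tensmxE !mxE -natrM mulnb; congr (_%:R); congr nat_of_bool.
apply/andP/eqP.
  by case=> /eqP -> /eqP ->.
by move/(can_inj (@mxtens_indexK _ _)) => [-> ->].
Qed.

Lemma unitaryC n (U : 'M[C]_n) : unitary U -> dagger U *m U = 1%:M.
Proof. by move=> h; apply: mulmx1C. Qed.

Lemma unitary_tens m n (A : 'M[C]_m) (B : 'M[C]_n) :
  unitary A -> unitary B -> unitary (A *t B).
Proof.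
by rewrite /unitary => hA hB; rewrite dagger_tens tensmx_mul hA hB tens11.
Qed.

Lemma unitary1 n : unitary (1%:M : 'M[C]_n).
Proof. by rewrite /unitary dagger1 mul1mx. Qed.

Lemma psd_conj m n (U : 'M[C]_(m, n)) (A : 'M[C]_n) : psd A -> psd (U *m A *m dagger U).
Proof.
move=> h v; have := h (dagger U *m v).
by rewrite dagger_mul daggerK !mulmxA.
Qed.

Lemma herm_conj m n (U : 'M[C]_(m, n)) (A : 'M[C]_n) : Defs.hermitian A -> Defs.hermitian (U *m A *m dagger U).
Proof. by rewrite /Defs.hermitian => h; rewrite !dagger_mul daggerK h mulmxA. Qed.

Lemma tr_conj n (U : 'M[C]_n) (A : 'M[C]_n) : unitary U -> \tr (U *m A *m dagger U) = \tr A.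
Proof. by move=> h; rewrite mxtrace_mulC mulmxA unitaryC // mul1mx. Qed.

Lemma density_conj n (U : 'M[C]_n) (A : 'M[C]_n) : unitary U -> density A ->
  density (U *m A *m dagger U).
Proof.
move=> hU [h1 h2 h3]; split; first exact: herm_conj.
  exact: psd_conj.
by rewrite tr_conj.
Qed.


Lemma ceq (x y : C) : complex.Re x = complex.Re y -> complex.Im x = complex.Im y -> x = y.
Proof. by case: x => a b; case: y => c d /= -> ->. Qed.

Lemma Re_lin2 (a b : R) (x y : C) :
  complex.Re (a%:C * x + b%:C * y) = a * complex.Re x + b * complex.Re y.
Proof. by case: x => ? ?; case: y => ? ? /=; ring. Qed.

Lemma Re_lin4 (a b c d : R) (x y z t : C) :
  complex.Re (a%:C * x + b%:C * y + c%:C * z + d%:C * t) =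
  a * complex.Re x + b * complex.Re y + c * complex.Re z + d * complex.Re t.
Proof. by case: x => ? ?; case: y => ? ?; case: z => ? ?; case: t => ? ? /=; ring. Qed.

Lemma Re_scal (a : R) (x : C) : complex.Re (a%:C * x) = a * complex.Re x.
Proof. by case: x => ? ? /=; ring. Qed.

Lemma Re_ge0 {z : C} : 0 <= z -> 0 <= complex.Re z.
Proof. by rewrite lecE => /andP[_]. Qed.

Definition Hc : 'M[C]_(2*2) := \matrix_(i, j)
  (if (i == 0 :> nat) && (j == 0 :> nat) then 1 else
   if (i == 3 :> nat) && (j == 3 :> nat) then 1 else
   if (i == 1 :> nat) && (j == 1 :> nat) then -1 else
   if (i == 2 :> nat) && (j == 2 :> nat) then -1 else
   if (i == 1 :> nat) && (j == 2 :> nat) then 2 else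
   if (i == 2 :> nat) && (j == 1 :> nat) then 2 else 0).

Lemma HAntE w : HAnt w = w%:C *: Hc.
Proof.
rewrite /HAnt; congr (_ *: _); apply/matrixP => i j.
rewrite !mxE.
case: i => [[|[|[|[|i]]]] Hi] //; case: j => [[|[|[|[|j]]]] Hj] //;
 rewrite /= ?mxE /=; apply: ceq => /=; ring.
Qed.

Definition vec4 (a b c d : R) : 'cV[C]_(2*2) := \col_i
  (if i == 0 :> nat then a else if i == 1 :> nat then b else
   if i == 2 :> nat then c else d)%:C.

Definition qf {n} (M : 'M[C]_n) (v : 'cV[C]_n) : C := (dagger v *m M *m v) 0 0.

Ltac expand2 := rewrite /qf /dagger /mxtrace; rewrite ?mxE;
  repeat (rewrite ?big_ord_recl ?big_ord0 ?mxE ?conjc_real /=).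

Lemma tr_Hc_up (rho : 'M[C]_(2*2)) :
  \tr (rho *m Hc) = 1%:C * \tr rho + (-2)%:C * qf rho (vec4 0 1 (-1) 0).
Proof. expand2; ring. Qed.

Lemma tr_Hc_lo (rho : 'M[C]_(2*2)) :
  \tr (rho *m Hc) = (-3)%:C * \tr rho + 4%:C * qf rho (vec4 1 0 0 0)
     + 2%:C * qf rho (vec4 0 1 1 0) + 4%:C * qf rho (vec4 0 0 0 1).
Proof. expand2; ring. Qed.

Lemma Hc_bounds (rho : 'M[C]_(2*2)) : psd rho ->
  -3 * complex.Re (\tr rho) <= complex.Re (\tr (rho *m Hc)) <= complex.Re (\tr rho).
Proof.
move=> h; apply/andP; split.
  rewrite tr_Hc_lo Re_lin4.
  have h1 := Re_ge0 (h (vec4 1 0 0 0)).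
  have h2 := Re_ge0 (h (vec4 0 1 1 0)).
  have h3 := Re_ge0 (h (vec4 0 0 0 1)).
  rewrite /qf; lra.
rewrite tr_Hc_up Re_lin2.
have h1 := Re_ge0 (h (vec4 0 1 (-1) 0)).
rewrite /qf; lra.
Qed.

Lemma trHc : \tr Hc = 0.
Proof. expand2; ring. Qed.

End S.

Section S3.
Local Open Scope complex_scope.
Local Open Scope classical_set_scope.
Variable R : realType.
Local Notation C := R[i].
Local Notation Hc := (Hc R).

Ltac expand3 := rewrite /qf /dagger /mxtrace; rewrite ?mxE;
  repeat (rewrite ?big_ord_recl ?big_ord0 ?mxE ?conjc_real /=).

Definition mxc (a d x1 x2 : R) : 'M[C]_2 := \matrix_(i, j)
  (if i == 0 :> nat then (if j == 0 :> nat then a%:C else x1 +i* x2)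
   else (if j == 0 :> nat then x1 -i* x2 else d%:C)).

Definition vec2c (p1 p2 q1 q2 : R) : 'cV[C]_2 := \col_i
  (if i == 0 :> nat then p1 +i* p2 else q1 +i* q2).

Lemma qf2E (A : 'M[C]_2) p1 p2 q1 q2 : qf A (vec2c p1 p2 q1 q2) =
  (p1 -i* p2) * A ord0 ord0 * (p1 +i* p2) + (p1 -i* p2) * A ord0 (lift ord0 ord0) * (q1 +i* q2)
  + (q1 -i* q2) * A (lift ord0 ord0) ord0 * (p1 +i* p2)
  + (q1 -i* q2) * A (lift ord0 ord0) (lift ord0 ord0) * (q1 +i* q2).
Proof. expand3; ring. Qed.

Lemma dens2 (A : 'M[C]_2) : density A -> exists a d x1 x2 : R,
  A = mxc a d x1 x2 /\ [/\ 0 <= a, 0 <= d, a + d = 1 & x1^+2 + x2^+2 <= a * d].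
Proof.
case=> hA hP hT.
have hh i j : A i j = conjc (A j i).
  by have := congr1 (fun M : 'M[C]_2 => M i j) (hA : dagger A = A); rewrite !mxE => <-.
have hq p1 p2 q1 q2 : 0 <= complex.Re (qf A (vec2c p1 p2 q1 q2)) := Re_ge0 (hP _).
have htr : A ord0 ord0 + A (lift ord0 ord0) (lift ord0 ord0) = 1.
  by move: hT; rewrite /mxtrace !big_ord_recl big_ord0 addr0.
have h00 := hh ord0 ord0.
have h11 := hh (lift ord0 ord0) (lift ord0 ord0).
have h01 := hh ord0 (lift ord0 ord0).
have eA : A = \matrix_(i, j) (if i == 0 :> nat then (if j == 0 :> nat then A ord0 ord0 else A ord0 (lift ord0 ord0))
   else (if j == 0 :> nat then A (lift ord0 ord0) ord0 else A (lift ord0 ord0) (lift ord0 ord0))).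
  apply/matrixP => i j; rewrite mxE.
  case: i => [[|[|i]] Hi] //; case: j => [[|[|j]] Hj] //=;
  by congr (A _ _); apply: val_inj.
rewrite eA in hq.
move: hq.
move: htr h00 h11 h01 eA.
move: (A ord0 ord0) (A (lift ord0 ord0) (lift ord0 ord0)) (A ord0 (lift ord0 ord0)) (A (lift ord0 ord0) ord0).
move=> [a a'] [d d'] [x1 x2] [y1 y2] htr h00 h11 h01 eA hq.
case: h00 => ha'. case: h11 => hd'. case: h01 => hx1 hx2.
have a0 : a' = 0 by lra.
have d0 : d' = 0 by lra.
subst a' d' y1.
have ty2 : y2 = - x2 by lra.
subst y2.
have htr' := congr1 (@complex.Re R) htr; rewrite /= in htr'.
exists a, d, x1, x2; split.
  rewrite eA; apply/matrixP => i j; rewrite !mxE.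
  by case: ifP => _; case: ifP => _ //; apply: ceq => /=; ring.
have h1 := hq 1 0 0 0.
have h2 := hq 0 0 1 0.
have h3 := hq (- x1) (- x2) a 0.
have h4 := hq d 0 (- x1) x2.
rewrite !qf2E !mxE /= in h1 h2 h3 h4.
have h5 : 0 <= (a + d) * (a * d - (x1^+2 + x2^+2)) by nra.
rewrite htr' mul1r in h5.
split; lra.
Qed.


Lemma sq_bound (s c : R) : 0 <= s -> 4 * c^+2 <= s^+2 -> - s <= 2 * c <= s.
Proof. move=> h1 h2; apply/andP; split; nra. Qed.

Lemma prod_bound (a d x1 x2 b e y1 y2 : R) :
  [/\ 0 <= a, 0 <= d, a + d = 1 & x1^+2 + x2^+2 <= a * d] ->
  [/\ 0 <= b, 0 <= e, b + e = 1 & y1^+2 + y2^+2 <= b * e] ->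
  -1 <= complex.Re (\tr ((mxc a d x1 x2 *t mxc b e y1 y2) *m Hc)) <= 1.
Proof.
move=> [ha hd hs hx] [hb he hs' hy].
have -> : complex.Re (\tr ((mxc a d x1 x2 *t mxc b e y1 y2) *m Hc)) =
   2 * (a * b + d * e + 2 * (x1 * y1 + x2 * y2)) - (a + d) * (b + e).
  by expand3; ring.
rewrite hs hs' mulr1.
set c := x1 * y1 + x2 * y2.
have hc : c ^+ 2 <= (a * d) * (b * e).
  have h1 : c ^+ 2 <= (x1^+2 + x2^+2) * (y1^+2 + y2^+2).
    have -> : (x1^+2 + x2^+2) * (y1^+2 + y2^+2) = c ^+ 2 + (x1 * y2 - x2 * y1) ^+ 2.
      by rewrite /c; ring.
    by rewrite lerDl sqr_ge0.
  have h2 : (x1^+2 + x2^+2) * (y1^+2 + y2^+2) <= (a * d) * (b * e).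
    apply: ler_pM => //; nra.
  lra.
have k1 := @sq_bound (a * b + d * e) c.
have k2 := @sq_bound (a * e + b * d) c.
have e1 : (a + d) * (b + e) = 1 by rewrite hs hs' mulr1.
have h0 : 0 <= a * b + d * e by nra.
have h0' : 0 <= a * e + b * d by nra.
have q1 : 4 * c ^+ 2 <= (a * b + d * e) ^+ 2 by have := sqr_ge0 (a * b - d * e); nra.
have q2 : 4 * c ^+ 2 <= (a * e + b * d) ^+ 2 by have := sqr_ge0 (a * e - b * d); nra.
move: (k1 h0 q1) (k2 h0' q2) => /andP[r1 r2] /andP[r3 r4].
apply/andP; split; nra.
Qed.

End S3.

Section S4.
Local Open Scope complex_scope.
Local Open Scope classical_set_scope.
Variable R : realType.
Local Notation C := R[i].
Local Notation Hc := (Hc R).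

Lemma ReD (x y : C) : complex.Re (x + y) = complex.Re x + complex.Re y.
Proof. by case: x => ? ?; case: y => ? ?. Qed.

Lemma Re_sum I (r : seq I) (P : pred I) (F : I -> C) :
  complex.Re (\sum_(i <- r | P i) F i) = \sum_(i <- r | P i) complex.Re (F i).
Proof. exact: (big_morph (@complex.Re R) ReD). Qed.

Lemma energy_dens (rho : 'M[C]_(2*2)) Ua Ub (w : R) : 0 <= w -> unitary Ua -> unitary Ub ->
  density rho -> -3 * w <= energy rho (HAnt w) Ua Ub <= w.
Proof.
move=> hw hUa hUb hr.
have hU := unitary_tens hUa hUb.
have [_ hP hT] := density_conj hU hr.
rewrite /energy HAntE -scalemxAr mxtraceZ Re_scal.
have := Hc_bounds hP; rewrite hT /= => /andP[h1 h2].
apply/andP; split; nra.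
Qed.

Lemma energy_prod (A B : 'M[C]_2) Ua Ub (w : R) : 0 <= w -> unitary Ua -> unitary Ub ->
  density A -> density B -> - w <= energy (A *t B) (HAnt w) Ua Ub <= w.
Proof.
move=> hw hUa hUb hA hB.
rewrite /energy dagger_tens !tensmx_mul.
have [a [d [x1 [x2 [-> ha]]]]] := dens2 (density_conj hUa hA).
have [b [e [y1 [y2 [-> hb]]]]] := dens2 (density_conj hUb hB).
rewrite HAntE -scalemxAr mxtraceZ Re_scal.
have /andP[h1 h2] := prod_bound ha hb.
apply/andP; split; nra.
Qed.

Lemma tr_sum n k (A : 'I_k -> 'M[C]_n) : \tr (\sum_(i < k) A i) = \sum_(i < k) \tr (A i).
Proof. rewrite /mxtrace; under eq_bigr do rewrite summxE. exact: exchange_big. Qed.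

Lemma energy_lin k (w : 'I_k -> R) (X : 'I_k -> 'M[C]_(2*2)) H Ua Ub :
  energy (\sum_(i < k) (w i)%:C *: X i) H Ua Ub = \sum_(i < k) w i * energy (X i) H Ua Ub.
Proof.
rewrite /energy mulmx_sumr !mulmx_suml tr_sum Re_sum.
apply: eq_bigr => i _.
by rewrite -scalemxAr -!scalemxAl mxtraceZ Re_scal.
Qed.

Lemma energy_sep rho Ua Ub (w : R) : 0 <= w -> unitary Ua -> unitary Ub ->
  separable rho -> - w <= energy rho (HAnt w) Ua Ub <= w.
Proof.
move=> hw hUa hUb [k [p [A [B [hp hs hA hB ->]]]]].
rewrite energy_lin.
have hb i := energy_prod hw hUa hUb (hA i) (hB i).
apply/andP; split.
  have -> : - w = \sum_(i < k) p i * (- w) by rewrite -mulr_suml hs mul1r.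
  apply: ler_sum => i _; have /andP[h1 _] := hb i.
  exact: (ler_wpM2l (hp i) h1).
rewrite [X in _ <= X](_ : w = \sum_(i < k) p i * w); last by rewrite -mulr_suml hs mul1r.
apply: ler_sum => i _; have /andP[_ h2] := hb i.
exact: (ler_wpM2l (hp i) h2).
Qed.

Lemma energies_n0 (rho H : 'M[C]_(2*2)) : energies rho H !=set0.
Proof. by exists (energy rho H 1%:M 1%:M), 1%:M, 1%:M; split => //; apply: unitary1. Qed.

Lemma CP_le (rho H : 'M[C]_(2*2)) (lo hi : R) :
  (forall Ua Ub, unitary Ua -> unitary Ub -> lo <= energy rho H Ua Ub <= hi) ->
  CP rho H <= hi - lo.
Proof.
move=> h; rewrite /CP lerB //.
  apply: ge_sup; first exact: energies_n0.
  by move=> x [Ua [Ub [h1 h2 ->]]]; have /andP[] := h _ _ h1 h2.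
apply: lb_le_inf; first exact: energies_n0.
by move=> x [Ua [Ub [h1 h2 ->]]]; have /andP[] := h _ _ h1 h2.
Qed.

Lemma CP_eq (rho H : 'M[C]_(2*2)) (lo hi : R) Ua Ub Va Vb :
  (forall Ua Ub, unitary Ua -> unitary Ub -> lo <= energy rho H Ua Ub <= hi) ->
  unitary Ua -> unitary Ub -> energy rho H Ua Ub = hi ->
  unitary Va -> unitary Vb -> energy rho H Va Vb = lo ->
  CP rho H = hi - lo.
Proof.
move=> h hUa hUb ehi hVa hVb elo.
have hub : ubound (energies rho H) hi.
  by move=> x [Wa [Wb [h1 h2 ->]]]; have /andP[] := h _ _ h1 h2.
have hlb : lbound (energies rho H) lo.
  by move=> x [Wa [Wb [h1 h2 ->]]]; have /andP[] := h _ _ h1 h2.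
rewrite /CP; congr (_ - _); apply/le_anti/andP; split.
- exact: ge_sup (energies_n0 _ _) hub.
- by apply: (ub_le_sup (ex_intro _ hi hub)); exists Ua, Ub.
- by apply: (ge_inf (ex_intro _ lo hlb)); exists Va, Vb.
- exact: lb_le_inf (energies_n0 _ _) hlb.
Qed.

End S4.

Section S5.
Local Open Scope complex_scope.
Local Open Scope classical_set_scope.
Variable R : realType.
Local Notation C := R[i].
Local Notation Hc := (Hc R).

Ltac expand5 := rewrite /qf /dagger /mxtrace; rewrite ?mxE;
  repeat (rewrite ?big_ord_recl ?big_ord0 ?mxE ?conjc_real /=).

Definition mx2 (a b c d : R) : 'M[C]_2 := \matrix_(i, j)
  (if i == 0 :> nat then (if j == 0 :> nat then a else b)
   else (if j == 0 :> nat then c else d))%:C.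

Lemma tens_mx2_vec4 (a b c d e f g h x0 x1 x2 x3 : R) :
  (mx2 a b c d *t mx2 e f g h) *m vec4 x0 x1 x2 x3 =
  vec4 (a*(e*x0+f*x1) + b*(e*x2+f*x3)) (a*(g*x0+h*x1) + b*(g*x2+h*x3))
       (c*(e*x0+f*x1) + d*(e*x2+f*x3)) (c*(g*x0+h*x1) + d*(g*x2+h*x3)).
Proof.
apply/matrixP => i j; rewrite [j]ord1.
case: i => [[|[|[|[|i]]]] Hi] //; expand5; ring.
Qed.

Lemma qf_Hc_vec4 (x0 x1 x2 x3 : R) :
  qf Hc (vec4 x0 x1 x2 x3) = (x0^+2 + x3^+2 - x1^+2 - x2^+2 + 4 * x1 * x2)%:C.
Proof. expand5; ring. Qed.

Lemma qf_1_vec4 (x0 x1 x2 x3 : R) :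
  qf 1%:M (vec4 x0 x1 x2 x3) = (x0^+2 + x1^+2 + x2^+2 + x3^+2)%:C.
Proof. expand5; ring. Qed.

Lemma daggerZ m n (a : C) (A : 'M[C]_(m, n)) : dagger (a *: A) = conjc a *: dagger A.
Proof. by apply/matrixP => i j; rewrite !mxE rmorphM. Qed.

Lemma conjR (k : R) : conjc (k%:C) = k%:C :> C.
Proof. by apply: ceq => /=; rewrite ?oppr0. Qed.

Lemma qf_scale n (M : 'M[C]_n) (k : R) v : qf M (k%:C *: v) = (k * k)%:C * qf M v.
Proof.
rewrite /qf daggerZ conjR -scalemxAl -scalemxAr -scalemxAl !mxE.
by rewrite rmorphM mulrA.
Qed.

Lemma bell_vec (psi : 'cV[C]_(2*2)) : bell_state psi ->
  exists x0 x1 x2 x3 : R, psi = (Num.sqrt 2)^-1%:C *: vec4 x0 x1 x2 x3 /\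
   [\/ [/\ x0 = 1, x1 = 0, x2 = 0 & x3 = 1], [/\ x0 = 1, x1 = 0, x2 = 0 & x3 = -1],
       [/\ x0 = 0, x1 = 1, x2 = 1 & x3 = 0] | [/\ x0 = 0, x1 = 1, x2 = -1 & x3 = 0]].
Proof.
have E (a b c d : R) (u : 'cV[C]_(2*2)) : u = vec4 a b c d ->
   (Num.sqrt 2)^-1%:C *: u = (Num.sqrt 2)^-1%:C *: vec4 a b c d by move->.
case=> [->|[->|[->|->]]].
- exists 1, 0, 0, 1; split; last by constructor 1.
  apply: E; apply/matrixP => i j; rewrite [j]ord1.
  by case: i => [[|[|[|[|i]]]] Hi] //; rewrite !mxE /=; apply: ceq => /=; ring.
- exists 1, 0, 0, (-1); split; last by constructor 2.
  apply: E; apply/matrixP => i j; rewrite [j]ord1.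
  by case: i => [[|[|[|[|i]]]] Hi] //; rewrite !mxE /=; apply: ceq => /=; ring.
- exists 0, 1, 1, 0; split; last by constructor 3.
  apply: E; apply/matrixP => i j; rewrite [j]ord1.
  by case: i => [[|[|[|[|i]]]] Hi] //; rewrite !mxE /=; apply: ceq => /=; ring.
- exists 0, 1, (-1), 0; split; last by constructor 4.
  apply: E; apply/matrixP => i j; rewrite [j]ord1.
  by case: i => [[|[|[|[|i]]]] Hi] //; rewrite !mxE /=; apply: ceq => /=; ring.
Qed.


Lemma tr11 (M : 'M[C]_1) : \tr M = M 0 0.
Proof. by rewrite /mxtrace big_ord1. Qed.

Lemma tr_outer n (phi : 'cV[C]_n) M : \tr (phi *m dagger phi *m M) = qf M phi.
Proof. by rewrite -mulmxA mxtrace_mulC tr11 /qf. Qed.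

Lemma psd_outer n (phi : 'cV[C]_n) : psd (phi *m dagger phi).
Proof.
move=> v.
have -> : dagger v *m (phi *m dagger phi) *m v =
   (dagger v *m phi) *m dagger (dagger v *m phi) by rewrite dagger_mul daggerK !mulmxA.
have e (u : 'M[C]_1) : (u *m dagger u) 0 0 = u 0 0 * conjc (u 0 0).
  by rewrite mxE big_ord1 /dagger !mxE.
rewrite e; exact: mulcJ_ge0.
Qed.

Lemma qf1_unitary n (U : 'M[C]_n) psi : unitary U -> qf 1%:M (U *m psi) = qf 1%:M psi.
Proof.
move=> hU; rewrite /qf !mulmx1 dagger_mul -mulmxA (mulmxA (dagger U)) unitaryC //.
by rewrite mul1mx.
Qed.

Lemma phi_bound (phi : 'cV[C]_(2*2)) : qf 1%:M phi = 1 ->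
  -3 <= complex.Re (qf Hc phi) <= 1.
Proof.
move=> h.
have := Hc_bounds (psd_outer phi).
have -> : \tr (phi *m dagger phi) = 1 by rewrite -[phi *m _]mulmx1 tr_outer.
by rewrite tr_outer /= mulr1.
Qed.

Lemma Wp_conj p psi (U : 'M[C]_(2*2)) : unitary U ->
  U *m Wp p psi *m dagger U =
  ((1-p)/4)%:C *: 1%:M + p%:C *: ((U *m psi) *m dagger (U *m psi)).
Proof.
move=> hU; rewrite /Wp mulmxDr mulmxDl -!scalemxAr -!scalemxAl mulmx1 hU.
by rewrite dagger_mul !mulmxA.
Qed.

Lemma energy_Wp p psi (w : R) Ua Ub : unitary Ua -> unitary Ub ->
  energy (Wp p psi) (HAnt w) Ua Ub = p * w * complex.Re (qf Hc ((Ua *t Ub) *m psi)).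
Proof.
move=> hUa hUb; rewrite /energy Wp_conj; last exact: unitary_tens.
transitivity (complex.Re ((p * w)%:C * qf Hc ((Ua *t Ub) *m psi))); last exact: Re_scal.
congr complex.Re.
rewrite HAntE mulmxDl -!scalemxAl mul1mx mxtraceD !mxtraceZ -scalemxAr mxtraceZ.
rewrite tr_outer trHc; ring.
Qed.

Lemma c2 : (Num.sqrt 2)^-1 * (Num.sqrt 2)^-1 = 2^-1 :> R.
Proof. by rewrite -invfM -expr2 sqr_sqrtr. Qed.

Lemma Re_RC (a b : R) : complex.Re (a%:C * b%:C) = a * b.
Proof. by rewrite -rmorphM. Qed.

Lemma unitary_mx2 (a b c d : R) : a^+2 + b^+2 = 1 -> c^+2 + d^+2 = 1 -> a*c + b*d = 0 ->
  unitary (mx2 a b c d).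
Proof.
move=> h1 h2 h3; apply/matrixP => i j.
case: i => [[|[|i]] Hi] //; case: j => [[|[|j]] Hj] //; expand5; apply: ceq => /=; nra.
Qed.

End S5.

Section S6.
Local Open Scope complex_scope.
Local Open Scope classical_set_scope.
Variable R : realType.
Local Notation C := R[i].
Local Notation Hc := (Hc R).

Lemma bell_attain (psi : 'cV[C]_(2*2)) : bell_state psi -> qf 1%:M psi = 1 /\
  exists Ua Ub Va Vb, [/\ unitary Ua, unitary Ub, unitary Va & unitary Vb] /\
    (complex.Re (qf Hc ((Ua *t Ub) *m psi)) = 1 /\
    complex.Re (qf Hc ((Va *t Vb) *m psi)) = -3).
Proof.
move=> /bell_vec [x0 [x1 [x2 [x3 [-> hc]]]]].
have hid : unitary (mx2 1 0 0 1 : 'M[C]_2) by apply: unitary_mx2; ring.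
have hZX : unitary (mx2 0 1 (-1) 0 : 'M[C]_2) by apply: unitary_mx2; ring.
have hX : unitary (mx2 0 1 1 0 : 'M[C]_2) by apply: unitary_mx2; ring.
have hZ : unitary (mx2 1 0 0 (-1) : 'M[C]_2) by apply: unitary_mx2; ring.
split.
  rewrite qf_scale qf_1_vec4 -rmorphM c2.
  by case: hc => -[-> -> -> ->]; apply: ceq => /=; lra.
case: hc => -[-> -> -> ->].
- exists (mx2 1 0 0 1), (mx2 1 0 0 1), (mx2 1 0 0 1), (mx2 0 1 (-1) 0); split; [by split|split];
  by rewrite -scalemxAr qf_scale tens_mx2_vec4 qf_Hc_vec4 Re_RC c2; lra.
- exists (mx2 1 0 0 1), (mx2 1 0 0 1), (mx2 1 0 0 1), (mx2 0 1 1 0); split; [by split|split];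
  by rewrite -scalemxAr qf_scale tens_mx2_vec4 qf_Hc_vec4 Re_RC c2; lra.
- exists (mx2 1 0 0 1), (mx2 1 0 0 1), (mx2 1 0 0 1), (mx2 1 0 0 (-1)); split; [by split|split];
  by rewrite -scalemxAr qf_scale tens_mx2_vec4 qf_Hc_vec4 Re_RC c2; lra.
- exists (mx2 1 0 0 1), (mx2 1 0 0 (-1)), (mx2 1 0 0 1), (mx2 1 0 0 1); split; [by split|split];
  by rewrite -scalemxAr qf_scale tens_mx2_vec4 qf_Hc_vec4 Re_RC c2; lra.
Qed.


Lemma CP_Wp (p w : R) (psi : 'cV[C]_(2*2)) : 0 <= p -> 0 <= w -> bell_state psi ->
  CP (Wp p psi) (HAnt w) = 4 * p * w.
Proof.
move=> hp hw hb.
have [n1 [Ua [Ub [Va [Vb [[h1 h2 h3 h4] [e1 e2]]]]]]] := bell_attain hb.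
have hpw : 0 <= p * w by apply: mulr_ge0.
rewrite (@CP_eq _ _ _ (-3 * (p * w)) (p * w) Ua Ub Va Vb) //.
- by ring.
- move=> Wa Wb hWa hWb; rewrite energy_Wp //.
  have := phi_bound (etrans (qf1_unitary psi (unitary_tens hWa hWb)) n1).
  move: (complex.Re _) => r /andP[r1 r2].
  move: hpw; move: (p * w) => q hq.
  apply/andP; split; nra.
- by rewrite energy_Wp // e1 mulr1.
- by rewrite energy_Wp // e2 mulrC mulNr.
Qed.

Lemma bell_density (psi : 'cV[C]_(2*2)) : bell_state psi -> density (Wp 1 psi).
Proof.
move=> hb; have [n1 _] := bell_attain hb.
have -> : Wp 1 psi = psi *m dagger psi.
  by rewrite /Wp subrr mul0r rmorph0 rmorph1 scale0r scale1r add0r.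
split.
- by rewrite /Defs.hermitian dagger_mul daggerK.
- exact: psd_outer.
- by rewrite -[psi *m _]mulmx1 tr_outer.
Qed.

Lemma CPmax_eq (w : R) : 0 < w -> CPmax (HAnt w) = 4 * w.
Proof.
move=> hw; have hw' := ltW hw.
have hb : bell_state (psi_minus R) by right; right; right.
have hub : ubound [set x | exists rho, density rho /\ x = CP rho (HAnt w)] (4 * w).
  move=> x [rho [hr ->]].
  have -> : 4 * w = w - (-3 * w) by ring.
  apply: CP_le => Ua Ub hUa hUb; exact: energy_dens.
have hm : [set x | exists rho, density rho /\ x = CP rho (HAnt w)] (4 * w).
  exists (Wp 1 (psi_minus R)); split; first exact: bell_density.
  by rewrite CP_Wp // mulr1.
rewrite /CPmax; apply/le_anti/andP; split.
- by apply: ge_sup => //; exists (4 * w).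
- exact: (ub_le_sup (ex_intro _ _ hub)).
Qed.

End S6.

Section S7.
Local Open Scope complex_scope.
Local Open Scope classical_set_scope.
Variable R : realType.
Local Notation C := R[i].
Local Notation Hc := (Hc R).

Ltac expand7 := rewrite /qf /dagger /mxtrace; rewrite ?mxE;
  repeat (rewrite ?big_ord_recl ?big_ord0 ?mxE ?conjc_real /=).

Lemma mx2_mul (a b c d e f g h : R) :
  mx2 a b c d *m mx2 e f g h = mx2 (a*e + b*g) (a*f + b*h) (c*e + d*g) (c*f + d*h).
Proof.
apply/matrixP => i j.
case: i => [[|[|i]] Hi] //; case: j => [[|[|j]] Hj] //; expand7; ring.
Qed.

Lemma dagger_mx2 (a b c d : R) : dagger (mx2 a b c d) = mx2 a c b d.
Proof.
apply/matrixP => i j.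
case: i => [[|[|i]] Hi] //; case: j => [[|[|j]] Hj] //; expand7; apply: ceq => /=; ring.
Qed.

Lemma tr_tens_mx2 (a b c d e f g h : R) :
  \tr ((mx2 a b c d *t mx2 e f g h) *m Hc) =
  (2 * (a*e + b*g + c*f + d*h) - (a + d) * (e + h))%:C.
Proof. expand7; ring. Qed.

Definition E0 : 'M[C]_2 := mx2 1 0 0 0.

Lemma density_E0 : density E0.
Proof.
split.
- by rewrite /Defs.hermitian /E0 dagger_mx2.
- move=> v; change (0 <= qf E0 v).
  have -> : qf E0 v = v ord0 0 * conjc (v ord0 0) by rewrite /E0; expand7; ring.
  exact: mulcJ_ge0.
- by rewrite /E0; expand7; apply: ceq => /=; ring.
Qed.

Lemma sep_E0 : separable (E0 *t E0).
Proof.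
exists 1%N, (fun _ => 1), (fun _ => E0), (fun _ => E0); split => //.
- by rewrite big_ord1.
- by move=> _; exact: density_E0.
- by move=> _; exact: density_E0.
- by rewrite big_ord1 rmorph1 scale1r.
Qed.

Lemma CP_sep_le (rho : 'M[C]_(2*2)) (w : R) : 0 <= w -> separable rho ->
  CP rho (HAnt w) <= 2 * w.
Proof.
move=> hw hs; have -> : 2 * w = w - - w by ring.
apply: CP_le => Ua Ub hUa hUb; exact: energy_sep.
Qed.

Lemma CP1_eq (w : R) : 0 < w -> CP1 (HAnt w) = 2 * w.
Proof.
move=> hw; have hw' := ltW hw.
have hid : unitary (mx2 1 0 0 1 : 'M[C]_2) by apply: unitary_mx2; ring.
have hX : unitary (mx2 0 1 1 0 : 'M[C]_2) by apply: unitary_mx2; ring.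
have hub : ubound [set x | exists rho, separable rho /\ x = CP rho (HAnt w)] (2 * w).
  by move=> x [rho [hr ->]]; apply: CP_sep_le.
have hm : [set x | exists rho, separable rho /\ x = CP rho (HAnt w)] (2 * w).
  exists (E0 *t E0); split; first exact: sep_E0.
  have -> : 2 * w = w - - w by ring.
  rewrite (@CP_eq _ _ _ (- w) w (mx2 1 0 0 1) (mx2 1 0 0 1) (mx2 1 0 0 1) (mx2 0 1 1 0)) //.
  - by move=> Ua Ub hUa hUb; apply: energy_sep => //; exact: sep_E0.
  - rewrite /energy dagger_tens !tensmx_mul HAntE -scalemxAr mxtraceZ Re_scal.
    by rewrite /E0 !dagger_mx2 !mx2_mul tr_tens_mx2 /=; lra.
  - rewrite /energy dagger_tens !tensmx_mul HAntE -scalemxAr mxtraceZ Re_scal.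
    by rewrite /E0 !dagger_mx2 !mx2_mul tr_tens_mx2 /=; lra.
rewrite /CP1; apply/le_anti/andP; split.
- by apply: ge_sup => //; exists (2 * w).
- exact: (ub_le_sup (ex_intro _ _ hub)).
Qed.

End S7.

Section S8.
Local Open Scope complex_scope.
Local Open Scope classical_set_scope.
Variable R : realType.
Local Notation C := R[i].
Local Notation Hc := (Hc R).

Ltac expand8 := rewrite /qf /dagger /mxtrace; rewrite ?mxE;
  repeat (rewrite ?big_ord_recl ?big_ord0 ?mxE ?conjc_real /=).

Definition row4 (a b c d : C) : 'rV[C]_(2*2) := \row_j
  (if j == 0 :> nat then a else if j == 1 :> nat then b else
   if j == 2 :> nat then c else d).

Lemma row4_neq0 (a b c d : C) : row4 a b c d != 0 -> [\/ a != 0, b != 0, c != 0 | d != 0].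
Proof.
move=> h; case: (eqVneq a 0) => [ha|]; last by constructor 1.
case: (eqVneq b 0) => [hb|]; last by constructor 2.
case: (eqVneq c 0) => [hc|]; last by constructor 3.
case: (eqVneq d 0) => [hd|]; last by constructor 4.
exfalso; move/negP: h; apply; apply/eqP/matrixP => i j.
by rewrite !mxE ha hb hc hd !if_same.
Qed.

Lemma rowE (v : 'rV[C]_(2*2)) : v = row4 (v 0 ord0) (v 0 (lift ord0 ord0))
  (v 0 (lift ord0 (lift ord0 ord0))) (v 0 (lift ord0 (lift ord0 (lift ord0 ord0)))).
Proof.
apply/matrixP => k j; rewrite [k]ord1 mxE.
by case: j => [[|[|[|[|j]]]] Hj] //=; congr (v _ _); apply: val_inj.
Qed.

Lemma neqC (y : R) : y != 0 -> y%:C != 0 :> C.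
Proof.
move=> hy; apply/eqP => /(congr1 (@complex.Re R)) /= h.
by move/eqP: hy; rewrite h.
Qed.

Lemma row4_mul (a b c d : C) (w : R) :
  row4 a b c d *m (w%:C *: Hc) =
  row4 (w%:C * a) (w%:C * (-b + 2 * c)) (w%:C * (2 * b - c)) (w%:C * d).
Proof.
apply/matrixP => k j; rewrite [k]ord1.
case: j => [[|[|[|[|j]]]] Hj] //; expand8; ring.
Qed.

Lemma eig_HAnt (w x : R) : 0 <= w -> real_spectrum (HAnt w) x -> x = w \/ x = -3 * w.
Proof.
move=> hw /eigenvalueP [v hv hv0].
rewrite (rowE v) HAntE row4_mul in hv; rewrite (rowE v) in hv0.
move: hv hv0; move: (v 0 ord0) (v 0 (lift ord0 ord0)) (v 0 (lift ord0 (lift ord0 ord0)))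
  (v 0 (lift ord0 (lift ord0 (lift ord0 ord0)))) => a b c d hv hv0.
have e j : (row4 (w%:C * a) (w%:C * (-b + 2 * c)) (w%:C * (2 * b - c)) (w%:C * d)) 0 j
   = (x%:C *: row4 a b c d) 0 j by rewrite hv.
have e0 := e (@Ordinal 4 0 isT); have e1 := e (@Ordinal 4 1 isT).
have e2 := e (@Ordinal 4 2 isT); have e3 := e (@Ordinal 4 3 isT).
rewrite !mxE /= in e0 e1 e2 e3.
case: (eqVneq x w) => [->|hxw]; first by left.
right.
have hwx : w%:C - x%:C != 0 :> C by rewrite -rmorphB; apply: neqC; rewrite subr_eq0 eq_sym.
have ha : a = 0.
  have : (w%:C - x%:C) * a = 0 by rewrite mulrBl e0 subrr.
  by move/eqP; rewrite mulf_eq0 (negbTE hwx) => /eqP.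
have hd : d = 0.
  have : (w%:C - x%:C) * d = 0 by rewrite mulrBl e3 subrr.
  by move/eqP; rewrite mulf_eq0 (negbTE hwx) => /eqP.
have hbc : c = - b.
  have : (w%:C - x%:C) * (b + c) = 0.
    rewrite mulrBl.
    have -> : w%:C * (b + c) = w%:C * (- b + 2 * c) + w%:C * (2 * b - c) by ring.
    by rewrite e1 e2; ring.
  move/eqP; rewrite mulf_eq0 (negbTE hwx) /= addrC addr_eq0 => /eqP //.
have hb : ((-3 * w)%:C - x%:C) * b = 0.
  have -> : ((-3 * w)%:C - x%:C) * b = w%:C * (- b + 2 * c) - x%:C * b by rewrite hbc; ring.
  by rewrite e1 subrr.
case: (eqVneq x (-3 * w)) => [//|hx3].
have hwx3 : (-3 * w)%:C - x%:C != 0 :> C by rewrite -rmorphB; apply: neqC; rewrite subr_eq0 eq_sym.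
move/eqP: hb; rewrite mulf_eq0 (negbTE hwx3) /= => /eqP hb0.
exfalso; case/row4_neq0: hv0; rewrite ?ha ?hd ?hbc ?hb0 ?oppr0 eqxx //.
Qed.

Lemma spec_eq (w : R) : 0 < w -> spec_spread (HAnt w) = 4 * w.
Proof.
move=> hw; have hw' := ltW hw.
have m1 : real_spectrum (HAnt w) w.
  apply/eigenvalueP; exists (row4 1 0 0 0).
    rewrite HAntE row4_mul; apply/matrixP => k j; rewrite [k]ord1.
    by case: j => [[|[|[|[|j]]]] Hj] //; rewrite !mxE /=; ring.
  by apply/eqP => /matrixP /(_ 0 (@Ordinal 4 0 isT)); rewrite !mxE /=; apply/eqP; exact: oner_neq0.
have m2 : real_spectrum (HAnt w) (-3 * w).
  apply/eigenvalueP; exists (row4 0 1 (-1) 0).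
    rewrite HAntE row4_mul; apply/matrixP => k j; rewrite [k]ord1.
    by case: j => [[|[|[|[|j]]]] Hj] //; rewrite !mxE /=; ring.
  by apply/eqP => /matrixP /(_ 0 (@Ordinal 4 1 isT)); rewrite !mxE /=; apply/eqP; exact: oner_neq0.
have hub : ubound (real_spectrum (HAnt w)) w.
  by move=> x /(eig_HAnt hw') [->|->] //; lra.
have hlb : lbound (real_spectrum (HAnt w)) (-3 * w).
  by move=> x /(eig_HAnt hw') [->|->] //; lra.
rewrite /spec_spread.
have -> : sup (real_spectrum (HAnt w)) = w.
  apply/le_anti/andP; split; first by apply: ge_sup => //; exists w.
  exact: (ub_le_sup (ex_intro _ _ hub)).
have -> : inf (real_spectrum (HAnt w)) = -3 * w.
  apply/le_anti/andP; split; first exact: (ge_inf (ex_intro _ _ hlb)).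
  by apply: lb_le_inf => //; exists w.
ring.
Qed.

End S8.

Unset Implicit Arguments.

Theorem mainTheorem4 (R : realType) (omega p : R) (psi : 'cV[R[i]]_(2 * 2)) :
  0 < omega -> 0 <= p <= 1 -> bell_state psi ->
  [/\ CP1 (HAnt omega) = 2 * omega,
      CPmax (HAnt omega) = 4 * omega,
      spec_spread (HAnt omega) = 4 * omega,
      CP (Wp p psi) (HAnt omega) = 4 * p * omega &
      (CP1 (HAnt omega) < CP (Wp p psi) (HAnt omega) <-> 1 / 2 < p)].
Proof.
move=> hw /andP[hp0 hp1] hb.
rewrite (CP1_eq hw) (CPmax_eq hw) (spec_eq hw) (CP_Wp hp0 (ltW hw) hb).
split => //.
have E : 4 * p * omega - 2 * omega = (2 * omega) * (2 * p - 1) by ring.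
have h2 : 0 < 2 * omega by lra.
split => h.
- by move: h; rewrite -[_ < 4 * p * omega]subr_gt0 E pmulr_rgt0 //; lra.
- by rewrite -subr_gt0 E pmulr_rgt0 //; lra.
Qed.
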